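(* Let $c\ge2$, $k\ge c$, $s\ge1$ be integers and let $\lambda_1$ be the smallest normalized Laplacian eigenvalue of $\Gamma^c(s,k)$. Then the strong coloring number satisfies $\chi(\Gamma^c(s,k))=k=\dfrac{c-\lambda_1}{1-\lambda_1}$.
   Context: For integers $k\ge c\ge2$ and $s\ge1$, $\Gamma^c(s,k)$ is the unoriented hypergraph whose vertex set is the disjoint union of $k$ sets $V_1,\dots,V_k$ each of size $s$, and whose edges are exactly all subsets $e$ with $|e|=c$ and $|e\cap V_i|\le1$ for every $i$. For an unoriented hypergraph with every vertex of degree $\deg v=|\{e: v\in e\}|\ge1$, the adjacency matrix has $A_{v,v}=0$ and $A_{v,w}=-|\{e: v,w\in e\}|$ for $v\ne w$; the normalized Laplacian is $L=\mathrm{Id}-D^{-1}A$, $D=\mathrm{diag}(\deg v)$, with eigenvalues $\lambda_1\le\dots\le\lambda_N$. A proper strong $k$-coloring is a map $V\to\{1,\dots,k\}$ such that any two distinct vertices in a common edge receive different colors; $\chi$ is the least such $k$. *)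

(* Defs.v *)
From HB Require Import structures.
From mathcomp Require Import all_boot all_order all_algebra.
Set Implicit Arguments. Unset Strict Implicit. Unset Printing Implicit Defensive.
Import Order.TTheory GRing.Theory Num.Theory.
Local Open Scope ring_scope.

Definition hdeg (n : nat) (H : {set {set 'I_n}}) (v : 'I_n) : nat :=
  #|[set e in H | v \in e]|.

Definition hadj (R : numFieldType) (n : nat) (H : {set {set 'I_n}}) : 'M[R]_n :=
  \matrix_(v < n, w < n)
    (if v == w then 0 else - (#|[set e in H | (v \in e) && (w \in e)]|)%:R).

Definition hdegmx (R : numFieldType) (n : nat) (H : {set {set 'I_n}}) : 'M[R]_n :=
  diag_mx (\row_(v < n) (hdeg H v)%:R).

Definition normLap (R : numFieldType) (n : nat) (H : {set {set 'I_n}}) : 'M[R]_n :=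
  1%:M - invmx (hdegmx R H) *m hadj R H.

Definition strong_colorable (n : nat) (H : {set {set 'I_n}}) (m : nat) : Prop :=
  exists f : 'I_n -> 'I_m,
    forall e, e \in H -> forall v w, v \in e -> w \in e -> v != w -> f v != f w.

Definition strong_chromatic_number (n : nat) (H : {set {set 'I_n}}) (q : nat) : Prop :=
  strong_colorable H q /\ (forall m, strong_colorable H m -> (q <= m)%N).

(* Gamma^c(s,k): vertex set 'I_(k*s), with V_i = {v | v %/ s = i}, i < k,
   each of size s; edges are the c-subsets meeting every V_i in at most one
   vertex. *)
Definition Gamma (c s k : nat) : {set {set 'I_(k * s)}} :=
  [set e : {set 'I_(k * s)} |
     (#|e| == c) && [forall i : 'I_k, #|[set v in e | v %/ s == i]| <= 1]%N].

(* Main.v *)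
From mathcomp Require Import zify ring lra.
Require Import Defs.
From HB Require Import structures.
From mathcomp Require Import all_boot all_order all_algebra all_fingroup.
Import Order.TTheory GRing.Theory Num.Theory.
Set Implicit Arguments. Unset Strict Implicit. Unset Printing Implicit Defensive.

Section Comb.
Variables (c s k : nat).

Lemma s_pos (u : 'I_(k * s)) : 0 < s.
Proof. move: (ltn_ord u); move: (nat_of_ord u) => m; rewrite lt0n; apply: contraTneq => ->; by rewrite muln0. Qed.

Lemma part_lt (u : 'I_(k * s)) : u %/ s < k.
Proof. by rewrite ltn_divLR ?(s_pos u). Qed.

Definition partO (u : 'I_(k * s)) : 'I_k := Ordinal (part_lt u).

Lemma GammaP (e : {set 'I_(k * s)}) :
  reflect (#|e| = c /\ {in e &, forall u u' : 'I_(k * s), u %/ s = u' %/ s -> u = u'})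
    (e \in Gamma c s k).
Proof.
rewrite inE; apply: (iffP andP) => [[/eqP hc /forallP h] | [hc h]]; split => //.
- move=> u u' hu hu' heq.
  have /card_le1_eqP H := h (partO u).
  have := H u u'. rewrite !inE hu hu' /= -heq eqxx. by move=> H2; rewrite H2.
- by rewrite hc.
- apply/forallP => i; apply/card_le1_eqP => u u'.
  rewrite !inE => /andP[hu /eqP e1] /andP[hu' /eqP e2].
  by apply: h => //; rewrite e1 e2.
Qed.

Definition Pcompat (f : {perm 'I_(k * s)}) :=
  forall u u', (f u %/ s == f u' %/ s) = (u %/ s == u' %/ s).

Lemma Pcompat_inv f : Pcompat f -> Pcompat (f^-1)%g.
Proof. by move=> h u u'; rewrite -h !permKV. Qed.

Lemma Gamma_perm f e : Pcompat f -> e \in Gamma c s k -> [set f x | x in e] \in Gamma c s k.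
Proof.
move=> hf /GammaP [hc h]; apply/GammaP; split.
  by rewrite card_imset //; apply: perm_inj.
move=> x y /imsetP [u hu ->] /imsetP [u' hu' ->] /eqP.
by rewrite hf => /eqP /(h _ _ hu hu') ->.
Qed.

Definition Ncnt (v w : 'I_(k * s)) := #|[set e in Gamma c s k | (v \in e) && (w \in e)]|.

Lemma Ncnt_le f v w : Pcompat f -> Ncnt v w <= Ncnt (f v) (f w).
Proof.
move=> hf; rewrite /Ncnt -(card_imset _ (imset_inj (@perm_inj _ f))).
apply: subset_leq_card; apply/subsetP => x /imsetP [e].
rewrite inE => /andP [he /andP [hv hw]] ->.
by rewrite inE Gamma_perm //= !(mem_imset _ _ (@perm_inj _ f)) hv hw.
Qed.

Lemma Ncnt_perm f v w : Pcompat f -> Ncnt (f v) (f w) = Ncnt v w.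
Proof.
move=> hf; apply/eqP; rewrite eqn_leq Ncnt_le // andbT.
have := @Ncnt_le (f^-1)%g (f v) (f w) (Pcompat_inv hf); by rewrite !permK.
Qed.


Lemma tperm_compat (u u' : 'I_(k * s)) : u %/ s = u' %/ s -> Pcompat (tperm u u').
Proof.
move=> h.
have E x : tperm u u' x %/ s = x %/ s.
  by case: tpermP => // ->; rewrite h.
by move=> x y; rewrite !E.
Qed.

Lemma blk_lt (j : 'I_k) (u : 'I_(k * s)) : j * s + u %% s < k * s.
Proof.
have hs := s_pos u; have hr := ltn_pmod u hs; have hj := ltn_ord j.
nia.
Qed.

Definition blkf (p : {perm 'I_k}) (u : 'I_(k * s)) : 'I_(k * s) :=
  Ordinal (blk_lt (p (partO u)) u).

Lemma blk_div p u : blkf p u %/ s = p (partO u).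
Proof.
rewrite /= divnMDl ?(s_pos u) // divn_small ?addn0 //.
exact: ltn_pmod (s_pos u).
Qed.

Lemma blk_mod p u : blkf p u %% s = u %% s.
Proof. by rewrite /= modnMDl modn_mod. Qed.

Lemma blk_inj p : injective (blkf p).
Proof.
move=> u u' h.
have h1 : partO u = partO u'.
  have := congr1 (fun x : 'I_(k * s) => nat_of_ord x %/ s) h.
  rewrite !blk_div => /val_inj; exact: perm_inj.
have h2 : u %% s = u' %% s.
  by have := congr1 (fun x : 'I_(k * s) => nat_of_ord x %% s) h; rewrite !blk_mod.
apply: val_inj; rewrite /= (divn_eq u s) (divn_eq u' s) h2.
by have := congr1 val h1 => /= ->.
Qed.

Definition blk p : {perm 'I_(k * s)} := perm (@blk_inj p).

Lemma blkE p u : blk p u = blkf p u.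
Proof. by rewrite permE. Qed.

Lemma blk_divE p u : blk p u %/ s = p (partO u).
Proof. by rewrite blkE blk_div. Qed.

Lemma blk_compat p : Pcompat (blk p).
Proof.
move=> u u'; rewrite !blk_divE.
have -> : (nat_of_ord (p (partO u)) == p (partO u')) = (p (partO u) == p (partO u')) by [].
by rewrite (inj_eq (@perm_inj _ p)).
Qed.


Variables (hk1 : 1 < k) (hs0 : 0 < s).

Lemma o0_lt : 0 < k * s. Proof. by rewrite muln_gt0 hs0 ltnW. Qed.
Lemma o1_lt : s < k * s. Proof. by rewrite -[X in X < _]mul1n ltn_pmul2r. Qed.
Definition o0 : 'I_(k * s) := Ordinal o0_lt.
Definition o1 : 'I_(k * s) := Ordinal o1_lt.
Lemma o0_div : o0 %/ s = 0. Proof. by rewrite /= div0n. Qed.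
Lemma o1_div : o1 %/ s = 1. Proof. by rewrite /= divnn hs0. Qed.

Lemma neq_part (x y : 'I_(k * s)) : x %/ s != y %/ s -> x != y.
Proof. by apply: contraNneq => ->. Qed.

Lemma chain_a (v w : 'I_(k * s)) : v %/ s = 0 -> w %/ s = 1 -> Ncnt v w = Ncnt o0 o1.
Proof.
move=> hv hw.
have hP : Pcompat (tperm v o0) by apply: tperm_compat; rewrite hv o0_div.
rewrite -(Ncnt_perm v w hP) tpermL tpermD; first last.
- by apply: neq_part; rewrite o0_div hw.
- by apply: neq_part; rewrite hv hw.
have hQ : Pcompat (tperm w o1) by apply: tperm_compat; rewrite hw o1_div.
rewrite -(Ncnt_perm o0 w hQ) tpermL tpermD //.
- by apply: neq_part; rewrite o0_div hw.
- by apply: neq_part; rewrite o0_div o1_div.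
Qed.

Definition i0 : 'I_k := Ordinal (ltnW hk1).
Definition i1 : 'I_k := Ordinal hk1.

Lemma chain_b (v w : 'I_(k * s)) : v %/ s = 0 -> w %/ s != 0 -> Ncnt v w = Ncnt o0 o1.
Proof.
move=> hv hw.
have hP := blk_compat (tperm (partO w) i1).
rewrite -(Ncnt_perm v w hP); apply: chain_a.
- rewrite blk_divE tpermD //; apply/eqP => /(congr1 val) /=; rewrite hv //.
  by move=> E; move: hw; rewrite -E eqxx.
- by rewrite blk_divE tpermL.
Qed.

Lemma chain_c (v w : 'I_(k * s)) : v %/ s != w %/ s -> Ncnt v w = Ncnt o0 o1.
Proof.
move=> hvw.
have hP := blk_compat (tperm (partO v) i0).
rewrite -(Ncnt_perm v w hP); apply: chain_b.
- by rewrite blk_divE tpermL.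
- rewrite blk_divE; apply: contra hvw => /eqP h.
  have : tperm (partO v) i0 (partO w) = tperm (partO v) i0 (partO v).
    by apply: val_inj; rewrite tpermL /= h.
  by move/perm_inj => /(congr1 val) /= ->.
Qed.

Lemma Ncnt_same (v w : 'I_(k * s)) : v %/ s = w %/ s -> v != w -> Ncnt v w = 0.
Proof.
move=> hvw neq; apply/eqP; rewrite cards_eq0; apply/eqP/setP => e; rewrite in_set0.
apply/negbTE/negP; rewrite inE => /andP [/GammaP [_ h] /andP [hv hw]].
by move/eqP: neq; apply; apply: h.
Qed.

Definition Sv (v : 'I_(k * s)) := [set e in Gamma c s k | v \in e].

Lemma NcntE v w : Ncnt v w = \sum_(e in Sv v) (w \in e).
Proof.
rewrite /Ncnt -sum1_card big_mkcond /= [RHS]big_mkcond /=; apply: eq_bigr => e _.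
rewrite /Sv !inE; case: (v \in e); case: (w \in e); rewrite ?andbT ?andbF //; by case: ifP.
Qed.

Lemma sum_Ncnt v : \sum_(w | w != v) Ncnt v w = (c - 1) * #|Sv v|.
Proof.
under eq_bigr do rewrite NcntE.
rewrite exchange_big /= [RHS]mulnC -sum_nat_const; apply: eq_bigr => e.
rewrite inE => /andP [/GammaP [hc _] hv].
transitivity (\sum_(w in e :\ v) 1).
  rewrite big_mkcond /= [RHS]big_mkcond /=; apply: eq_bigr => w _.
  by rewrite !inE; case: (w == v); case: (w \in e).
by rewrite sum1_card -hc (cardsD1 v e) hv add1n subn1.
Qed.

Lemma part_lt2 (i : 'I_k) (a : 'I_s) : i * s + a < k * s.
Proof. have := ltn_ord i; have := ltn_ord a; nia. Qed.

Lemma part_card (i : 'I_k) : #|[set w : 'I_(k * s) | w %/ s == i]| = s.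
Proof.
have -> : [set w : 'I_(k * s) | w %/ s == i] =
    [set Ordinal (part_lt2 i a) | a : 'I_s].
  apply/setP => w; rewrite !inE; apply/eqP/imsetP => [h | [a _ ->]].
    have hs := s_pos w.
    exists (Ordinal (ltn_pmod w hs)) => //; apply: val_inj => /=.
    by rewrite -h -divn_eq.
  rewrite /= divnMDl // divn_small ?addn0 //.
by rewrite card_imset ?card_ord // => a b /(congr1 val) /= /addnI /val_inj.
Qed.

Lemma part_cardC (v : 'I_(k * s)) : #|[set w : 'I_(k * s) | v %/ s != w %/ s]| = k * s - s.
Proof.
have -> : [set w : 'I_(k * s) | v %/ s != w %/ s] = ~: [set w : 'I_(k * s) | w %/ s == partO v].
  by apply/setP => w; rewrite !inE eq_sym.
by have := cardsC [set w : 'I_(k * s) | w %/ s == partO v]; rewrite part_card card_ord; lia.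
Qed.

Lemma deg_rel v : (c - 1) * #|Sv v| = Ncnt o0 o1 * (k * s - s).
Proof.
rewrite -sum_Ncnt (bigID (fun w : 'I_(k * s) => v %/ s == w %/ s)) /= big1 ?add0n; last first.
  by move=> w /andP [h1 /eqP h2]; apply: Ncnt_same; rewrite // eq_sym.
rewrite -(part_cardC v) [RHS]mulnC -sum_nat_const.
rewrite [RHS]big_mkcond [LHS]big_mkcond /=; apply: eq_bigr => w _; rewrite inE.
case: eqP => h /=; first by rewrite h eqxx.
case: (v %/ s =P w %/ s) => //= hne.
by apply: chain_c; apply/eqP.
Qed.

Variables (hc2 : 2 <= c) (hck : c <= k).

Lemma g_lt (t : 'I_c) : t * s < k * s.
Proof. by rewrite ltn_pmul2r // (leq_trans (ltn_ord t) hck). Qed.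

Definition e0 := [set Ordinal (g_lt t) | t : 'I_c].

Lemma e0_in : e0 \in Gamma c s k.
Proof.
have ginj : injective (fun t : 'I_c => Ordinal (g_lt t)).
  by move=> a b /(congr1 val) /= /eqP; rewrite eqn_pmul2r // => /eqP /val_inj.
apply/GammaP; split; first by rewrite card_imset ?card_ord.
move=> x y /imsetP [a _ ->] /imsetP [b _ ->] /=.
by rewrite !mulnK // => /val_inj ->.
Qed.

Lemma p_pos : 0 < Ncnt o0 o1.
Proof.
rewrite card_gt0; apply/set0Pn; exists e0; rewrite inE e0_in /=.
apply/andP; split; apply/imsetP.
- by exists (Ordinal (ltnW hc2)) => //; apply: val_inj.
- by exists (Ordinal hc2) => //; apply: val_inj => /=; rewrite mul1n.
Qed.

Definition vert (i : 'I_k) : 'I_(k * s) := Ordinal (part_lt2 i (Ordinal hs0)).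

Lemma vert_div i : vert i %/ s = i.
Proof. by rewrite /= addn0 mulnK. Qed.

Lemma chrom : strong_chromatic_number (Gamma c s k) k.
Proof.
split.
  exists partO => e /GammaP [_ h] v w hv hw; apply: contra => /eqP E.
  by apply/eqP; apply: h => //; have := congr1 val E.
move=> m [f hf].
have hinj : injective (fun i => f (vert i)).
  move=> i j /eqP E; apply/eqP; apply: contraTT E => hij.
  have hne : vert i %/ s != vert j %/ s by rewrite !vert_div.
  have := p_pos; rewrite -(chain_c hne) card_gt0 => /set0Pn [e].
  rewrite inE => /andP [he /andP [hi hj]].
  by apply: (hf e he) => //; apply: neq_part.
by have := leq_card _ hinj; rewrite !card_ord.
Qed.

Variable R : realFieldType.
Local Notation pt u := (nat_of_ord u %/ s)%N.
Local Open Scope ring_scope.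

Definition mm := (k * s - s)%N.
Definition PP := Ncnt o0 o1.
Definition D0 : R := (PP * mm)%:R / (c - 1)%:R.
Definition alpha : R := (c - 1)%:R / mm%:R.

Lemma mm_pos : (0 < mm)%N.
Proof. rewrite /mm; have := hk1; have := hs0; nia. Qed.

Lemma c1_pos : (0 < c - 1)%N.
Proof. by rewrite subn_gt0. Qed.

Lemma deg_R v : (hdeg (Gamma c s k) v)%:R = D0.
Proof.
have h := deg_rel v; rewrite /D0 -h natrM mulrAC divff ?mul1r //.
by rewrite pnatr_eq0 -lt0n c1_pos.
Qed.

Lemma D0_neq0 : D0 != 0.
Proof.
rewrite /D0 mulf_neq0 // ?invr_eq0 pnatr_eq0 -lt0n ?c1_pos //.
by rewrite muln_gt0 p_pos mm_pos.
Qed.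

Lemma alpha_gt0 : 0 < alpha.
Proof. by rewrite /alpha divr_gt0 // ltr0n ?c1_pos ?mm_pos. Qed.

Lemma Lentry v w : normLap R (Gamma c s k) v w =
   (v == w)%:R + (pt v != pt w)%:R * alpha.
Proof.
rewrite /normLap.
have -> : hdegmx R (Gamma c s k) = D0%:M.
  rewrite /hdegmx -diag_const_mx; congr diag_mx; apply/rowP => i.
  by rewrite !mxE deg_R.
rewrite invmx_scalar mul_scalar_mx !mxE.
case: eqP => [-> | /eqP hvw]; first by rewrite eqxx /= mulr0 subr0 mul0r addr0.
rewrite /= add0r mulrN opprK.
have -> : #|[set e in Gamma c s k | (v \in e) && (w \in e)]| = Ncnt v w by [].
case: (pt v =P pt w) => [E | /eqP E] /=.
  by rewrite Ncnt_same // mul0r addr0 mulr0.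
rewrite chain_c // mul1r /alpha /D0 -/PP natrM.
have hP : (PP%:R : R) != 0 by rewrite pnatr_eq0 -lt0n p_pos.
have hm : (mm%:R : R) != 0 by rewrite pnatr_eq0 -lt0n mm_pos.
have hc1 : ((c - 1)%:R : R) != 0 by rewrite pnatr_eq0 -lt0n c1_pos.
by field; rewrite hP hm hc1.
Qed.

Lemma mulL (x : 'rV[R]_(k * s)) (w : 'I_(k * s)) :
  (x *m normLap R (Gamma c s k)) 0 w =
  x 0 w + alpha * \sum_(v | pt v != pt w) x 0 v.
Proof.
rewrite !mxE; under eq_bigr do rewrite Lentry mulrDr.
rewrite big_split /= (bigD1 w) //= eqxx mulr1 big1 ?addr0; last first.
  by move=> v /negbTE ->; rewrite mulr0.
congr (_ + _); rewrite mulr_sumr [RHS]big_mkcond /=; apply: eq_bigr => v _.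
by case: (pt v != pt w); rewrite ?mul1r ?mul0r ?mulr0 // mulrC.
Qed.

Lemma sum_part (F : nat -> R) (w : 'I_(k * s)) :
  \sum_(v : 'I_(k * s) | pt v == pt w) F (pt v) = s%:R * F (pt w).
Proof.
under eq_bigr => v /eqP -> do [].
transitivity (\sum_(v in [set v : 'I_(k * s) | pt v == partO w]) F (pt w)).
  by apply: eq_bigl => v; rewrite inE.
by rewrite sumr_const part_card mulr_natl.
Qed.

Lemma sum_split (x : 'rV[R]_(k * s)) (w : 'I_(k * s)) :
  \sum_(v | pt v != pt w) x 0 v =
  \sum_v x 0 v - \sum_(v | pt v == pt w) x 0 v.
Proof.
by rewrite (bigID (fun v : 'I_(k * s) => pt v == pt w) predT) /= addrC addrK.
Qed.

Definition lam0 : R := 1 - alpha * s%:R.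

Lemma lam0_eig : eigenvalue (normLap R (Gamma c s k)) lam0.
Proof.
pose F (i : nat) : R := (i == 0%N)%:R - (i == 1%N)%:R.
pose x : 'rV[R]_(k * s) := \row_v F (pt v).
apply/eigenvalueP; exists x; last first.
  apply/eqP => /rowP /(_ o0); rewrite !mxE o0_div /F /= subr0 => /eqP.
  by rewrite oner_eq0.
apply/rowP => w; rewrite mulL sum_split.
have hX : \sum_v x 0 v = 0.
  under eq_bigr do rewrite mxE.
  rewrite /F sumrB.
  have E (i : 'I_k) : \sum_(v : 'I_(k * s)) ((pt v == i)%:R : R) = s%:R.
    transitivity (\sum_(v in [set v : 'I_(k * s) | pt v == i]) (1 : R)).
      by rewrite [RHS]big_mkcond /=; apply: eq_bigr => v _; rewrite inE; case: eqP.
    by rewrite sumr_const part_card.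
  by rewrite (E i0) (E i1) subrr.
have hY : \sum_(v | pt v == pt w) x 0 v = s%:R * x 0 w.
  under eq_bigr do rewrite mxE.
  by rewrite sum_part mxE.
rewrite hX hY !mxE /lam0; ring.
Qed.

Lemma lam0_min mu : eigenvalue (normLap R (Gamma c s k)) mu -> lam0 <= mu.
Proof.
case/eigenvalueP => x hx xn0.
rewrite leNgt; apply/negP => hlt.
set T := \sum_v x 0 v.
have hw (w : 'I_(k * s)) :
    (mu - 1) * x 0 w = alpha * (T - \sum_(v | pt v == pt w) x 0 v).
  have := congr1 (fun M : 'rV[R]_(k * s) => M 0 w) hx.
  rewrite /= mulL sum_split mxE => E.
  by rewrite mulrBl mul1r -E addrC addKr.
have ha := alpha_gt0.
have hs : (0 : R) < s%:R by rewrite ltr0n.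
have hK : mu - 1 + alpha * s%:R < 0.
  by move: hlt; rewrite /lam0 => hlt; lra.
have has : 0 < alpha * s%:R by rewrite mulr_gt0.
have hm1 : mu - 1 != 0.
  by apply: ltr0_neq0; move: hK has; lra.
have hconst (w w' : 'I_(k * s)) : pt w = pt w' -> x 0 w = x 0 w'.
  move=> E; apply: (mulfI hm1); rewrite !hw.
  by congr (_ * (_ - _)); apply: eq_bigl => v; rewrite E.
have hY (w : 'I_(k * s)) : \sum_(v | pt v == pt w) x 0 v = s%:R * x 0 w.
  transitivity (\sum_(v : 'I_(k * s) | pt v == pt w) x 0 w).
    by apply: eq_bigr => v /eqP E; apply: hconst.
  exact: (sum_part (fun=> x 0 w) w).
have hKn0 : mu - 1 + alpha * s%:R != 0 by rewrite ltr0_neq0.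
set K := mu - 1 + alpha * s%:R in hK hKn0.
have hx0 (w : 'I_(k * s)) : x 0 w = alpha * T / K.
  apply: (mulfI hKn0); rewrite mulrCA divff // mulr1.
  have := hw w; rewrite hY /K; move=> E; rewrite mulrDl E; ring.
set c0 := alpha * T / K in hx0.
have hT : T = (k * s)%:R * c0.
  rewrite /T; under eq_bigr do rewrite hx0.
  by rewrite sumr_const card_ord mulr_natl.
have hc0 : c0 != 0.
  apply: contra xn0 => /eqP E; apply/eqP/rowP => j.
  by rewrite hx0 E mxE.
have : K = alpha * (k * s)%:R.
  have E1 : K * c0 = alpha * T by rewrite /c0 mulrCA divff // mulr1.
  apply: (mulIf hc0); rewrite E1 hT; ring.
move=> EK; move: hK; rewrite EK; apply/negP; rewrite -leNgt.
by rewrite mulr_ge0 // ltW.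
Qed.


Lemma final_eq : (k%:R : R) = (c%:R - lam0) / (1 - lam0).
Proof.
have hsk : (s <= k * s)%N by rewrite leq_pmull // ltnW.
have hc1 : (1 <= c)%N by rewrite ltnW.
rewrite /lam0 /alpha /mm natrB // natrB // natrM.
have h1 : (s%:R : R) != 0 by rewrite pnatr_eq0 -lt0n.
have h2 : (k%:R : R) - 1 != 0 by rewrite subr_eq0 pnatr_eq1 gtn_eqF.
have h3 : (c%:R : R) - 1 != 0 by rewrite subr_eq0 pnatr_eq1 gtn_eqF.
have h4 : (k%:R : R) * s%:R - s%:R != 0.
  by rewrite -{2}[s%:R]mul1r -mulrBl mulf_neq0.
field; rewrite h4 /=.
have -> : (k%:R : R) * s%:R - s%:R - (k%:R * s%:R - s%:R - (c%:R - 1) * s%:R) =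
   (c%:R - 1) * s%:R by ring.
by rewrite mulf_neq0.
Qed.

Lemma lam1_eq (l1 : R) : eigenvalue (normLap R (Gamma c s k)) l1 ->
  (forall mu : R, eigenvalue (normLap R (Gamma c s k)) mu -> l1 <= mu) ->
  l1 = lam0.
Proof.
move=> he hmin; apply/eqP; rewrite eq_le hmin ?lam0_eig //.
exact: lam0_min.
Qed.

End Comb.

Local Open Scope ring_scope.

Theorem mainTheorem5 (R : realFieldType) (c k s : nat)
  (hc : (2 <= c)%N) (hk : (c <= k)%N) (hs : (1 <= s)%N) (lambda1 : R) :
  eigenvalue (normLap R (Gamma c s k)) lambda1 ->
  (forall mu : R, eigenvalue (normLap R (Gamma c s k)) mu -> lambda1 <= mu) ->
  strong_chromatic_number (Gamma c s k) k /\
  (k%:R : R) = (c%:R - lambda1) / (1 - lambda1).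
Proof.
have hk1 : (1 < k)%N by apply: leq_trans hk.
move=> he hmin; split; first exact: (chrom hk1 hs).
rewrite (lam1_eq hk1 hs hc hk he hmin).
exact: final_eq.
Qed.
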